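(* Let $P$ be a finite connected ranked poset with maximum rank $r$, and let $\sigma$ be any permutation of $\{0,1,\ldots,r\}$. Let $\mathcal{O}$ be an orbit of $\Phi_{\mathrm{row}(\sigma)}$ acting on $J(P)$. Then the distribution on $J(P)$ that is uniform on $\mathcal{O}$ and zero outside $\mathcal{O}$ is toggle-symmetric.
   Context: $P$ is ranked with rank function $\mathrm{rk}\colon P\to\mathbb{N}$ ($0$ in the image, $\mathrm{rk}(q)=\mathrm{rk}(p)+1$ when $q$ covers $p$). $J(P)$ is the set of order ideals of $P$. For $p\in P$, the toggle $\tau_p\colon J(P)\to J(P)$ sends $I$ to $I\cup\{p\}$ if $p\notin I$ and $p$ is minimal in $P\setminus I$, to $I\setminus\{p\}$ if $p\in I$ and $p$ is maximal in $I$, and to $I$ otherwise. $\tau_i$ is the composition of all $\tau_p$ with $\mathrm{rk}(p)=i$ (these commute). $\Phi_{\mathrm{row}(\sigma)}:=\tau_{\sigma(0)}\circ\tau_{\sigma(1)}\circ\cdots\circ\tau_{\sigma(r)}$. $\mathcal{T}^+_p(I)=1$ iff $p\notin I$ and $p$ minimal in $P\setminus I$; $\mathcal{T}^-_p(I)=1$ iff $p\in I$ and $p$ maximal in $I$ (else $0$). A distribution $\mu$ on $J(P)$ is toggle-symmetric if $\mathbb{E}(\mu;\mathcal{T}^+_p)=\mathbb{E}(\mu;\mathcal{T}^-_p)$ for all $p\in P$. *)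

(* Defs.v *)
From HB Require Import structures.
From mathcomp Require Import all_boot all_order all_algebra all_fingroup.
Set Implicit Arguments. Unset Strict Implicit. Unset Printing Implicit Defensive.
Import Order.TTheory GRing.Theory Num.Theory.

Open Scope order_scope.

Section Toggles.
Variables (d : Order.disp_t) (T : finPOrderType d).

Definition covers (p q : T) : bool :=
  (p < q) && [forall z : T, ~~ ((p < z) && (z < q))].

Definition rank_function (rk : T -> nat) : Prop :=
  (exists p : T, rk p = 0%N) /\ (forall p q : T, covers p q -> rk q = (rk p).+1).

Definition poset_connected : Prop :=
  forall x y : T, connect (fun a b : T => (a <= b) || (b <= a)) x y.

Definition order_ideal (I : {set T}) : bool :=
  [forall p : T, forall q : T, (p \in I) && (q <= p) ==> (q \in I)].

Definition JP : {set {set T}} := [set I : {set T} | order_ideal I].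

Definition min_outside (I : {set T}) (p : T) : bool :=
  (p \notin I) && [forall q : T, (q < p) ==> (q \in I)].
Definition max_inside (I : {set T}) (p : T) : bool :=
  (p \in I) && [forall q : T, (p < q) ==> (q \notin I)].

Definition toggle (p : T) (I : {set T}) : {set T} :=
  if min_outside I p then p |: I
  else if max_inside I p then I :\ p
  else I.

Definition toggle_rank (rk : T -> nat) (i : nat) : {set T} -> {set T} :=
  foldr (fun p f => toggle p \o f) id (enum [pred p : T | rk p == i]).

Definition Phi_row (rk : T -> nat) (r : nat) (sigma : {perm 'I_r.+1})
  : {set T} -> {set T} :=
  foldr (fun i f => toggle_rank rk (sigma i) \o f) id (enum 'I_r.+1).

Definition Tplus (p : T) (I : {set T}) : nat := min_outside I p.
Definition Tminus (p : T) (I : {set T}) : nat := max_inside I p.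

Definition expect (mu : {set T} -> rat) (f : {set T} -> nat) : rat :=
  (\sum_(I in JP) mu I * (f I)%:R)%R.

Definition toggle_symmetric (mu : {set T} -> rat) : Prop :=
  forall p : T, expect mu (Tplus p) = expect mu (Tminus p).

(* the orbit of I0 under a map F (I0 in J(P), on which F is a bijection) *)
Definition orbit_set (F : {set T} -> {set T}) (I0 : {set T}) : {set {set T}} :=
  [set I | fconnect F I0 I].

Definition uniform_on (O : {set {set T}}) (I : {set T}) : rat :=
  if I \in O then ((#|O|)%:R)^-1%R else 0%R.

End Toggles.

(* Main.v *)
Require Import Defs.
From HB Require Import structures.
From mathcomp Require Import all_boot all_order all_algebra all_fingroup.
Set Implicit Arguments. Unset Strict Implicit. Unset Printing Implicit Defensive.
Import Order.TTheory GRing.Theory.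

Section Base.
Variables (d : Order.disp_t) (T : finPOrderType d).
Local Open Scope order_scope.
Implicit Types (X Y : {set T}) (p q : T).

Lemma idealP X : reflect (forall p q, p \in X -> q <= p -> q \in X) (order_ideal X).
Proof.
apply: (iffP forallP) => [H p q pX qp | H p].
  by have /forallP/(_ q)/implyP := H p; apply; rewrite pX qp.
by apply/forallP => q; apply/implyP => /andP[]; exact: H.
Qed.

Lemma up_cover_aux n p q : leq #|[set z | (p < z) && (z < q)]| n -> p < q ->
  exists2 c, covers p c & c <= q.
Proof.
elim: n q => [|n IH] q Hn pq;
  (case: (boolP [forall z : T, ~~ ((p < z) && (z < q))]) => H;
  [by exists q; rewrite ?lexx // /covers pq H|]);
  move/forallPn: H => [z]; rewrite negbK => /andP[pz zq].
- move: Hn; rewrite leqn0 cards_eq0 => /eqP E.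
  have: z \in [set z | (p < z) && (z < q)] by rewrite inE pz zq.
  by rewrite E inE.
- have Hc : leq #|[set w | (p < w) && (w < z)]| n.
    rewrite -ltnS; apply: leq_trans Hn; apply: proper_card; apply/properP; split.
      by apply/subsetP => w; rewrite !inE => /andP[-> wz]; rewrite (lt_trans wz zq).
    by exists z; rewrite !inE ?pz ?zq ?ltxx ?andbF.
  have [c cc cz] := IH z Hc pz.
  by exists c => //; exact: le_trans cz (ltW zq).
Qed.

Lemma up_cover p q : p < q -> exists2 c, covers p c & c <= q.
Proof. exact: up_cover_aux. Qed.

Lemma down_cover_aux n p q : leq #|[set z | (q < z) && (z < p)]| n -> q < p ->
  exists2 c, covers c p & q <= c.
Proof.
elim: n q => [|n IH] q Hn pq;
  (case: (boolP [forall z : T, ~~ ((q < z) && (z < p))]) => H;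
  [by exists q; rewrite ?lexx // /covers pq H|]);
  move/forallPn: H => [z]; rewrite negbK => /andP[pz zq].
- move: Hn; rewrite leqn0 cards_eq0 => /eqP E.
  have: z \in [set z | (q < z) && (z < p)] by rewrite inE pz zq.
  by rewrite E inE.
- have Hc : leq #|[set w | (z < w) && (w < p)]| n.
    rewrite -ltnS; apply: leq_trans Hn; apply: proper_card; apply/properP; split.
      by apply/subsetP => w; rewrite !inE => /andP[zw ->]; rewrite (lt_trans pz zw).
    by exists z; rewrite !inE ?pz ?zq ?ltxx.
  have [c cc cz] := IH z Hc zq.
  by exists c => //; exact: le_trans (ltW pz) cz.
Qed.

Lemma down_cover p q : q < p -> exists2 c, covers c p & q <= c.
Proof. exact: down_cover_aux. Qed.

Lemma min_outsideE X p : order_ideal X ->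
  min_outside X p = (p \notin X) && [forall q, covers q p ==> (q \in X)].
Proof.
move=> /idealP HX; rewrite /min_outside; congr (_ && _).
apply/forallP/forallP => H q; apply/implyP.
- by move=> /andP[qp _]; exact: (implyP (H q)).
- move=> qp; have [c cp qc] := down_cover qp.
  exact: HX (implyP (H c) cp) qc.
Qed.

Lemma max_insideE X p : order_ideal X ->
  max_inside X p = (p \in X) && [forall q, covers p q ==> (q \notin X)].
Proof.
move=> /idealP HX; rewrite /max_inside; congr (_ && _).
apply/forallP/forallP => H q; apply/implyP.
- by move=> /andP[qp _]; exact: (implyP (H q)).
- move=> pq; have [c pc cq] := up_cover pq.
  apply/negP => qX; have := implyP (H c) pc; by rewrite (HX _ _ qX cq).
Qed.

Lemma Tplus_eq X Y p : order_ideal X -> order_ideal Y ->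
  (forall x, (x == p) || covers x p -> (x \in X) = (x \in Y)) ->
  Tplus p X = Tplus p Y.
Proof.
move=> iX iY H; rewrite /Tplus !min_outsideE // H ?eqxx //.
congr (nat_of_bool (_ && _)); apply: eq_forallb => q.
by case: (boolP (covers q p)) => //= c; rewrite H // c orbT.
Qed.

Lemma Tminus_eq X Y p : order_ideal X -> order_ideal Y ->
  (forall x, (x == p) || covers p x -> (x \in X) = (x \in Y)) ->
  Tminus p X = Tminus p Y.
Proof.
move=> iX iY H; rewrite /Tminus !max_insideE // H ?eqxx //.
congr (nat_of_bool (_ && _)); apply: eq_forallb => q.
by case: (boolP (covers p q)) => //= c; rewrite H // c orbT.
Qed.

Lemma toggle_other q X x : x != q -> (x \in toggle q X) = (x \in X).
Proof.
move=> xq; rewrite /toggle; case: ifP => _; first by rewrite in_setU1 (negbTE xq).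
by case: ifP => _ //; rewrite in_setD1 xq.
Qed.

Lemma min_max X p : order_ideal X -> min_outside X p -> max_inside (p |: X) p.
Proof.
move=> /idealP HX /andP[pX _]; rewrite /max_inside setU11 /=.
apply/forallP => z; apply/implyP => pz; rewrite in_setU1 negb_or.
rewrite eq_sym (lt_eqF pz) /=; apply/negP => zX.
by move: pX; rewrite (HX _ _ zX (ltW pz)).
Qed.

Lemma max_min X p : order_ideal X -> max_inside X p -> min_outside (X :\ p) p.
Proof.
move=> /idealP HX /andP[pX _]; rewrite /min_outside setD11 /=.
apply/forallP => z; apply/implyP => zp; rewrite in_setD1 (lt_eqF zp) /=.
exact: HX pX (ltW zp).
Qed.

Lemma toggle_ideal q X : order_ideal X -> order_ideal (toggle q X).
Proof.
move=> iX; have HX := idealP X iX.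
rewrite /toggle; case: ifP => [/andP[qX /forallP Hq]|_].
  apply/idealP => a b; rewrite !in_setU1 => /orP[/eqP->|aX] ba.
    case: (eqVneq b q) => //= bq; apply: (implyP (Hq b)).
    by rewrite lt_neqAle bq.
  by rewrite (HX _ _ aX ba) orbT.
case: ifP => [/andP[qX /forallP Hq]|_] //.
apply/idealP => a b; rewrite !in_setD1 => /andP[aq aX] ba.
rewrite (HX _ _ aX ba) andbT; apply/eqP => bq; subst b.
have := implyP (Hq a); rewrite lt_neqAle eq_sym aq ba => /(_ isT).
by rewrite aX.
Qed.

Lemma toggleK q X : order_ideal X -> toggle q (toggle q X) = X.
Proof.
move=> iX; case Hm: (min_outside X q).
  rewrite {2}/toggle Hm /toggle /min_outside setU11 /= min_max //.
  by rewrite setU1K //; case/andP: Hm.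
case HM: (max_inside X q).
  rewrite {2}/toggle Hm HM /toggle max_min // setD1K //; by case/andP: HM.
by rewrite {2}/toggle Hm HM /toggle Hm HM.
Qed.

Lemma toggle_swap J p : order_ideal J ->
  [/\ Tplus p J = Tminus p (toggle p J), Tminus p J = Tplus p (toggle p J)
    & ((p \in toggle p J) : nat) + Tminus p J = ((p \in J) : nat) + Tplus p J].
Proof.
move=> iJ; rewrite /Tplus /Tminus.
case Hm: (min_outside J p).
  have pJ : p \notin J by case/andP: Hm.
  have h1 : min_outside (p |: J) p = false by rewrite /min_outside setU11.
  have h2 : max_inside J p = false by rewrite /max_inside (negbTE pJ).
  by rewrite /toggle Hm min_max // h1 h2 setU11 (negbTE pJ).
case HM: (max_inside J p).
  have pJ : p \in J by case/andP: HM.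
  have h1 : max_inside (J :\ p) p = false by rewrite /max_inside setD11.
  by rewrite /toggle Hm HM max_min // h1 setD11 pJ.
rewrite /toggle Hm HM; split; by rewrite ?Hm ?HM.
Qed.

Lemma fold_ideal e X : order_ideal X -> order_ideal (foldr (@toggle _ T) X e).
Proof. by move=> iX; elim: e => //= a e IH; exact: toggle_ideal. Qed.

Lemma fold_inj e X Y : order_ideal X -> order_ideal Y ->
  foldr (@toggle _ T) X e = foldr (@toggle _ T) Y e -> X = Y.
Proof.
move=> iX iY; elim: e => //= a e IH E; apply: IH.
by rewrite -(toggleK a (fold_ideal e iX)) E toggleK // fold_ideal.
Qed.

Lemma fold_other e X x : x \notin e -> (x \in foldr (@toggle _ T) X e) = (x \in X).
Proof.
elim: e => //= a e IH; rewrite in_cons negb_or => /andP[xa xe].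
by rewrite toggle_other // IH.
Qed.

End Base.

Lemma foldr_comp (A B: Type) (g : A -> B -> B) (s : seq A) x :
  foldr (fun a f => g a \o f) id s x = foldr g x s.
Proof. by elim: s => //= a s ->. Qed.

Lemma split_in (A : eqType) (s : seq A) x : x \in s -> exists s1 s2, s = s1 ++ x :: s2.
Proof. by case/splitPr => s1 s2; exists s1, s2. Qed.

Section Rank.
Variables (d : Order.disp_t) (T : finPOrderType d) (rk : T -> nat).
Hypothesis Hrk : forall p q : T, covers p q -> rk q = (rk p).+1.
Local Open Scope order_scope.
Implicit Types (X Y : {set T}) (p q : T).

Notation tr := (toggle_rank rk).

Lemma tr_fold j X : tr j X = foldr (@toggle _ T) X (enum [pred q | rk q == j]).
Proof. by rewrite /toggle_rank foldr_comp. Qed.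

Lemma tr_ideal j X : order_ideal X -> order_ideal (tr j X).
Proof. by move=> iX; rewrite tr_fold fold_ideal. Qed.

Lemma tr_other j X x : rk x != j -> (x \in tr j X) = (x \in X).
Proof. by move=> xj; rewrite tr_fold fold_other // mem_enum inE. Qed.

Lemma tr_inj j X Y : order_ideal X -> order_ideal Y -> tr j X = tr j Y -> X = Y.
Proof. by rewrite !tr_fold; exact: fold_inj. Qed.

Definition RF (s : seq nat) X := foldr (fun j X => tr j X) X s.

Lemma RF_ideal s X : order_ideal X -> order_ideal (RF s X).
Proof. by move=> iX; elim: s => //= a s IH; exact: tr_ideal. Qed.

Lemma RF_other s X x : rk x \notin s -> (x \in RF s X) = (x \in X).
Proof.
elim: s => //= a s IH; rewrite in_cons negb_or => /andP[xa xe].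
by rewrite tr_other // IH.
Qed.

Lemma RF_inj s X Y : order_ideal X -> order_ideal Y -> RF s X = RF s Y -> X = Y.
Proof.
move=> iX iY; elim: s => //= a s IH E; apply: IH.
exact: tr_inj (RF_ideal _ iX) (RF_ideal _ iY) E.
Qed.

Lemma RF_cat s1 s2 X : RF (s1 ++ s2) X = RF s1 (RF s2 X).
Proof. by rewrite /RF foldr_cat. Qed.

Lemma tr_swap J p : order_ideal J ->
  let A := tr (rk p) J in
  [/\ Tplus p J = Tminus p A, Tminus p J = Tplus p A
    & ((p \in A) : nat) + Tminus p J = ((p \in J) : nat) + Tplus p J].
Proof.
move=> iJ /=; rewrite tr_fold.
have : p \in enum [pred q | rk q == rk p] by rewrite mem_enum inE.
move/split_in => [e1 [e2 E]].
have U := enum_uniq [pred q | rk q == rk p]; rewrite E in U.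
have He x : x \in e1 ++ p :: e2 -> rk x = rk p.
  by rewrite -E mem_enum inE => /eqP.
move: U; rewrite cat_uniq /= negb_or => /and4P[_ /andP[pe1 _] pe2 _].
have out1 x : (x == p) || covers x p || covers p x -> (x \notin e1) && (x \notin e2).
  case/orP => [/orP[/eqP->|c]|c]; first by rewrite pe1 pe2.
    apply/andP; split; apply/negP => xe; have := He x;
      rewrite mem_cat in_cons xe ?orbT => /(_ isT); rewrite (Hrk c) => /eqP;
      by rewrite -[X in X == _]addn0 -addn1 eqn_add2l.
  apply/andP; split; apply/negP => xe; have := He x;
    rewrite mem_cat in_cons xe ?orbT => /(_ isT); rewrite (Hrk c) => /eqP;
    by rewrite -[X in _ == X]addn0 -addn1 eqn_add2l.
rewrite E foldr_cat /=.
set J' := foldr _ J e2; set A' := toggle p J'.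
have iJ' : order_ideal J' by exact: fold_ideal.
have iA' : order_ideal A' by exact: toggle_ideal.
have iA : order_ideal (foldr (@toggle _ T) A' e1) by exact: fold_ideal.
have [s1 s2 s3] := toggle_swap p iJ'.
have eP : Tplus p J = Tplus p J'.
  apply: Tplus_eq => // x Hx; rewrite fold_other //.
  have /out1/andP[] : (x == p) || covers x p || covers p x.
    by case/orP: Hx => ->; rewrite ?orbT.
  by [].
have eM : Tminus p J = Tminus p J'.
  apply: Tminus_eq => // x Hx; rewrite fold_other //.
  have /out1/andP[] : (x == p) || covers x p || covers p x.
    by case/orP: Hx => ->; rewrite ?orbT.
  by [].
have fP : Tplus p (foldr (@toggle _ T) A' e1) = Tplus p A'.
  apply: Tplus_eq => // x Hx; rewrite fold_other //.
  have /out1/andP[] : (x == p) || covers x p || covers p x.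
    by case/orP: Hx => ->; rewrite ?orbT.
  by [].
have fM : Tminus p (foldr (@toggle _ T) A' e1) = Tminus p A'.
  apply: Tminus_eq => // x Hx; rewrite fold_other //.
  have /out1/andP[] : (x == p) || covers x p || covers p x.
    by case/orP: Hx => ->; rewrite ?orbT.
  by [].
have pJ : (p \in J') = (p \in J) by rewrite fold_other.
by rewrite eP eM fP fM fold_other // -pJ; split.
Qed.

End Rank.

Section Orbit.
Variables (d : Order.disp_t) (T : finPOrderType d) (F : {set T} -> {set T}).
Hypothesis FJ : forall X, order_ideal X -> order_ideal (F X).
Hypothesis Finj : forall X Y, order_ideal X -> order_ideal Y -> F X = F Y -> X = Y.

Lemma orbit_sub I0 : order_ideal I0 -> orbit_set F I0 \subset JP T.
Proof.
move=> iI; apply/subsetP => X; rewrite !inE => /iter_findex <-.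
by elim: (findex F I0 X) => //= n IH; exact: FJ.
Qed.

Lemma orbit_img I0 : order_ideal I0 -> F @: orbit_set F I0 = orbit_set F I0.
Proof.
move=> iI; have sO := orbit_sub iI.
have inj : {in orbit_set F I0 &, injective F}.
  move=> X Y XO YO; apply: Finj.
  - by have := subsetP sO X XO; rewrite inE.
  - by have := subsetP sO Y YO; rewrite inE.
apply/eqP; rewrite eqEcard card_in_imset // leqnn andbT.
apply/subsetP => _ /imsetP[X HX ->]; rewrite !inE in HX *.
exact: connect_trans HX (fconnect1 F X).
Qed.

Lemma orbit_sum I0 (f : {set T} -> nat) : order_ideal I0 ->
  (\sum_(X in orbit_set F I0) f (F X) = \sum_(X in orbit_set F I0) f X)%N.
Proof.
move=> iI; have sO := orbit_sub iI.
rewrite -{2}(orbit_img iI) big_imset //.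
move=> X Y XO YO; apply: Finj.
- by have := subsetP sO X XO; rewrite inE.
- by have := subsetP sO Y YO; rewrite inE.
Qed.

Lemma expect_unif (O : {set {set T}}) (f : {set T} -> nat) : O \subset JP T ->
  expect (uniform_on O) f = ((#|O|)%:R^-1 * (\sum_(I in O) f I)%N%:R)%R.
Proof.
move=> sO; rewrite /expect natr_sum mulr_sumr.
rewrite [LHS]big_mkcond [RHS]big_mkcond; apply: eq_bigr => I _.
rewrite /uniform_on; case: (boolP (I \in O)) => IO; first by rewrite (subsetP sO _ IO).
by rewrite GRing.mul0r; case: ifP.
Qed.

End Orbit.

Theorem lemma8p5 (d : Order.disp_t) (T : finPOrderType d) (rk : T -> nat)
  (r : nat) (sigma : {perm 'I_r.+1}) (I0 : {set T}) :
  poset_connected T ->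
  rank_function rk ->
  r = (\max_(p : T) rk p)%N ->
  I0 \in JP T ->
  toggle_symmetric (uniform_on (orbit_set (Phi_row rk sigma) I0)).
Proof.
move=> _ [_ Hrk] Hr; rewrite inE => iI0 p.
set s := map (fun j => nat_of_ord (sigma j)) (enum 'I_r.+1).
have PhiE X : Phi_row rk sigma X = RF rk s X.
  by rewrite /Phi_row foldr_comp /RF /s foldr_map enumT.
have PJ X : order_ideal X -> order_ideal (Phi_row rk sigma X).
  by move=> iX; rewrite PhiE RF_ideal.
have Pinj X Y : order_ideal X -> order_ideal Y ->
    Phi_row rk sigma X = Phi_row rk sigma Y -> X = Y.
  by rewrite !PhiE; exact: RF_inj.
set O := orbit_set _ I0.
have sO : O \subset JP T by exact: orbit_sub.
have OJ X : X \in O -> order_ideal X by move=> XO; have := subsetP sO X XO; rewrite inE.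
have Osum f : (\sum_(X in O) f (Phi_row rk sigma X) = \sum_(X in O) f X)%N.
  exact: orbit_sum.
rewrite !expect_unif //.
suff -> : (\sum_(I in O) Tplus p I = \sum_(I in O) Tminus p I)%N by [].
have Us : uniq s.
  rewrite map_inj_uniq ?enum_uniq // => a b /val_inj; exact: perm_inj.
have ps : rk p \in s.
  have hp : (rk p < r.+1)%N by rewrite ltnS Hr leq_bigmax.
  apply/mapP; exists (perm_inv sigma (Ordinal hp)); first by rewrite mem_enum.
  by rewrite permKV.
have [s1 [s2 Es]] := split_in ps.
move: Us; rewrite Es cat_uniq /= => /and3P[_ Hd /andP[is2 _]].
move: Hd; rewrite negb_or => /andP[is1 /hasPn Hd].
set i := rk p in is1 is2 Es.
have PhiE2 X : Phi_row rk sigma X = RF rk s1 (toggle_rank rk i (RF rk s2 X)).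
  by rewrite PhiE Es RF_cat.
have rc1 x : covers p x -> rk x = i.+1 by exact: Hrk.
have rc2 x : covers x p -> rk x = i.-1 by move/Hrk; rewrite -/i => ->.
have facts X : order_ideal X ->
  let J := RF rk s2 X in let A := toggle_rank rk i J in
  [/\ (p \in Phi_row rk sigma X) = (p \in A), (p \in J) = (p \in X),
      (i.+1 \notin s2 -> Tminus p J = Tminus p X),
      (i.+1 \in s2 -> Tminus p A = Tminus p (Phi_row rk sigma X)) &
      ((i.-1 \notin s2 -> Tplus p J = Tplus p X) /\
      (i.-1 \in s2 -> Tplus p A = Tplus p (Phi_row rk sigma X)))].
  move=> iX J A.
  have iJ : order_ideal J by exact: RF_ideal.
  have iA : order_ideal A by exact: tr_ideal.
  have iP : order_ideal (Phi_row rk sigma X) by exact: PJ.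
  split.
  - by rewrite PhiE2 RF_other.
  - by rewrite RF_other.
  - move=> h; apply: Tminus_eq => // x /orP[/eqP->|/rc1 e]; rewrite RF_other //.
    by rewrite e.
  - move=> h; apply: Tminus_eq => // x /orP[/eqP->|/rc1 e]; rewrite PhiE2 RF_other //.
    by rewrite e; apply: Hd.
  split.
  - move=> h; apply: Tplus_eq => // x /orP[/eqP->|/rc2 e]; rewrite RF_other //.
    by rewrite e.
  - move=> h; apply: Tplus_eq => // x /orP[/eqP->|/rc2 e]; rewrite PhiE2 RF_other //.
    by rewrite e; apply: Hd.
have sw X : order_ideal X -> _ := fun iX => tr_swap Hrk p (RF_ideal rk s2 iX).
case: (boolP (i.+1 \in s2)) => hu; case: (boolP (i.-1 \in s2)) => hl.
- have key X : X \in O -> ((p \in Phi_row rk sigma X) : nat) + Tplus p (Phi_row rk sigma X)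
      = ((p \in X) : nat) + Tminus p (Phi_row rk sigma X).
    move=> /OJ iX; have [f1 f2 _ f4 [_ f6]] := facts X iX.
    have [a1 a2 a3] := sw X iX.
    by rewrite f1 -f2 -f4 // -f6 // -a1 -a2; exact: a3.
  have : (\sum_(X in O) (((p \in Phi_row rk sigma X) : nat) + Tplus p (Phi_row rk sigma X))
     = \sum_(X in O) (((p \in X) : nat) + Tminus p (Phi_row rk sigma X)))%N.
    by apply: eq_bigr.
  rewrite !big_split /=.
  rewrite (Osum (fun X => (p \in X) : nat)) (Osum (Tplus p)) (Osum (Tminus p)).
  by move/eqP; rewrite eqn_add2l => /eqP.
- have key X : X \in O -> Tplus p X = Tminus p (Phi_row rk sigma X).
    move=> /OJ iX; have [f1 f2 _ f4 [f5 _]] := facts X iX.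
    have [a1 a2 a3] := sw X iX.
    by rewrite -f5 // a1 f4.
  by rewrite (eq_bigr _ key) Osum.
- have key X : X \in O -> Tminus p X = Tplus p (Phi_row rk sigma X).
    move=> /OJ iX; have [f1 f2 f3 _ [_ f6]] := facts X iX.
    have [a1 a2 a3] := sw X iX.
    by rewrite -f3 // a2 f6.
  by rewrite [RHS](eq_bigr _ key) Osum.
- have key X : X \in O -> ((p \in Phi_row rk sigma X) : nat) + Tminus p X
      = ((p \in X) : nat) + Tplus p X.
    move=> /OJ iX; have [f1 f2 f3 _ [f5 _]] := facts X iX.
    have [a1 a2 a3] := sw X iX.
    by rewrite f1 -f2 -f3 // -f5.
  have : (\sum_(X in O) (((p \in Phi_row rk sigma X) : nat) + Tminus p X)
     = \sum_(X in O) (((p \in X) : nat) + Tplus p X))%N.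
    by apply: eq_bigr.
  rewrite !big_split /=.
  rewrite (Osum (fun X => (p \in X) : nat)).
  by move/eqP; rewrite eqn_add2l => /eqP.
Qed.
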